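(* For every finite simple graph $G$ and every weight function $w:V(G)\to\mathbb{R}$, if $G$ is $w$-well-dominated then $G$ is $w$-well-covered. Equivalently, $WWD(G)$ is a subspace of $WCW(G)$.
   Context: For $w:V(G)\to\mathbb{R}$ and $S\subseteq V(G)$, $w(S)=\sum_{s\in S}w(s)$. A dominating set is a set $S$ with every vertex in $S$ or adjacent to a vertex of $S$; it is minimal if no proper subset is dominating. $G$ is $w$-well-dominated if all minimal dominating sets have the same weight; $G$ is $w$-well-covered if all maximal (by inclusion) independent sets have the same weight. $WWD(G)$ denotes the set of all $w$ for which $G$ is $w$-well-dominated, and $WCW(G)$ the set of all $w$ for which $G$ is $w$-well-covered (both are vector spaces of functions $V(G)\to\mathbb{R}$). *)

(* Defs.v *)
From HB Require Import structures.
From mathcomp Require Import all_boot all_order all_algebra.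
Set Implicit Arguments. Unset Strict Implicit. Unset Printing Implicit Defensive.
Import Order.TTheory GRing.Theory Num.Theory.
Local Open Scope ring_scope.

Definition simple_graph (T : finType) (e : rel T) : Prop :=
  symmetric e /\ irreflexive e.

Definition weight (R : numDomainType) (T : finType) (w : T -> R) (S : {set T}) : R :=
  \sum_(s in S) w s.

Definition dominating (T : finType) (e : rel T) (S : {set T}) : bool :=
  [forall v, (v \in S) || [exists u in S, e v u]].

Definition minimal_dominating (T : finType) (e : rel T) (S : {set T}) : bool :=
  minset (dominating e) S.

Definition independent (T : finType) (e : rel T) (S : {set T}) : bool :=
  [forall u in S, forall v in S, ~~ e u v].

Definition maximal_independent (T : finType) (e : rel T) (S : {set T}) : bool :=
  maxset (independent e) S.

Definition w_well_dominated (R : numDomainType) (T : finType) (e : rel T) (w : T -> R) : Prop :=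
  forall S1 S2 : {set T}, minimal_dominating e S1 -> minimal_dominating e S2 ->
    weight w S1 = weight w S2.

Definition w_well_covered (R : numDomainType) (T : finType) (e : rel T) (w : T -> R) : Prop :=
  forall S1 S2 : {set T}, maximal_independent e S1 -> maximal_independent e S2 ->
    weight w S1 = weight w S2.

(* Main.v *)
Require Import Defs.
From HB Require Import structures.
From mathcomp Require Import all_boot all_order all_algebra.

Lemma maxind_mindom (T : finType) (e : rel T) (S : {set T}) :
  symmetric e -> irreflexive e ->
  maximal_independent e S -> minimal_dominating e S.
Proof.
move=> sym irr /maxsetP [indS maxS].
have indP : forall u v, u \in S -> v \in S -> ~~ e u v.
  by move=> u v uS vS; move/forallP: indS => /(_ u); rewrite uS /= => /forallP /(_ v); rewrite vS.
have domS : dominating e S.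
  apply/forallP => v; case vS: (v \in S) => //=.
  apply/existsP.
  have : ~~ independent e (v |: S).
    apply/negP => H; have := maxS _ H (subsetUr _ _) => /setP /(_ v).
    by rewrite in_setU1 eqxx vS.
  case/forallPn => u; rewrite negb_imply => /andP [uvS /forallPn [x]].
  rewrite negb_imply negbK => /andP [xvS exu].
  move: uvS xvS exu; rewrite !in_setU1.
  case/orP => [/eqP ->|uS]; case/orP => [/eqP ->|xS] exu.
  - by move: exu; rewrite irr.
  - by exists x; rewrite xS.
  - by exists u; rewrite uS /= sym.
  - by move: (indP _ _ uS xS); rewrite exu.
apply/minsetP; split => // B domB sBS.
apply/eqP; rewrite eqEsubset sBS /=; apply/subsetP => v vS.
move/forallP: domB => /(_ v) /orP [//|/existsP [u /andP [uB evu]]].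
by move: (indP _ _ vS (subsetP sBS _ uB)); rewrite evu.
Qed.

Theorem mainTheorem3 (R : realFieldType) (T : finType) (e : rel T)
  (w : T -> R) :
  simple_graph e -> w_well_dominated e w -> w_well_covered e w.
Proof.
move=> [sym irr] H S1 S2 h1 h2.
by apply: H; apply: maxind_mindom.
Qed.
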